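(* Let $B$ be an admissible Banach sequence space, $X$ a Banach space, $\|\cdot\|_m$ ($m\in\mathbb Z$) norms on $X$ each equivalent to the norm of $X$, and $(A_m)_{m\in\mathbb Z}$ a sequence of bounded linear operators on $X$. If the operator $T_B\colon\mathcal D(T_B)\to Y_B$ is bijective, then $(A_m)_{m\in\mathbb Z}$ admits an exponential dichotomy with respect to the sequence of norms $\|\cdot\|_m$.
   Context: Banach sequence spaces: let $\mathcal S$ be the set of real sequences $(s_n)_{n\in\mathbb Z}$. A linear subspace $B\subset\mathcal S$ with norm $\|\cdot\|_B$ is a normed sequence space if $\mathbf{s}'\in B$ and $|s_n|\le|s'_n|$ for all $n$ imply $\mathbf{s}\in B$ and $\|\mathbf{s}\|_B\le\|\mathbf{s}'\|_B$; it is a Banach sequence space if complete. It is admissible if (i) $\chi_{\{n\}}\in B$ and $\|\chi_{\{n\}}\|_B>0$ for all $n\in\mathbb Z$; (ii) for all $\mathbf{s}\in B$, $m\in\mathbb Z$ the shift $(s_{n+m})_n$ is in $B$ with norm at most $N\|\mathbf{s}\|_B$ for a fixed $N>0$. $Y_B$ is the space of sequences $\mathbf{x}=(x_n)_{n\in\mathbb Z}$ in $X$ with $(\|x_n\|_n)_n\in B$, normed by $\|\mathbf{x}\|_{Y_B}=\|(\|x_n\|_n)_n\|_B$. $T_B$ is defined by $(T_B\mathbf{x})_n=x_n-A_{n-1}x_{n-1}$ on the domain $\mathcal D(T_B)=\{\mathbf{x}\in Y_B: T_B\mathbf{x}\in Y_B\}$. Set $\mathcal A(n,m)=A_{n-1}\cdots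 A_m$ for $n>m$ and $\mathcal A(m,m)=\mathrm{Id}$. The sequence $(A_m)$ admits an exponential dichotomy with respect to the norms $\|\cdot\|_m$ if: (1) there are projections $P_m\colon X\to X$ with $A_mP_m=P_{m+1}A_m$ for all $m$, such that each $A_m|_{\ker P_m}\colon\ker P_m\to\ker P_{m+1}$ is invertible; (2) there are constants $D>0$ and $0<\lambda<1<\mu$ such that for all $x\in X$, $\|\mathcal A(n,m)P_mx\|_n\le D\lambda^{n-m}\|x\|_m$ for $n\ge m$, and $\|\mathcal A(n,m)Q_mx\|_n\le D\mu^{n-m}\|x\|_m$ for $n\le m$, where $Q_m=\mathrm{Id}-P_m$ and, for $n<m$, $\mathcal A(n,m)=(\mathcal A(m,n)|_{\ker P_n})^{-1}\colon\ker P_m\to\ker P_n$. *)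

(* Defs.v *)
From Stdlib Require Import Reals ZArith.
Open Scope R_scope.

Definition is_norm {V : Type} (zero : V) (add : V -> V -> V) (scal : R -> V -> V)
  (f : V -> R) : Prop :=
  (forall x, 0 <= f x) /\
  (forall x, f x = 0 -> x = zero) /\
  (forall a x, f (scal a x) = Rabs a * f x) /\
  (forall x y, f (add x y) <= f x + f y).

Record NormedSpace := mkNormedSpace {
  car :> Type;
  zero : car;
  add : car -> car -> car;
  opp : car -> car;
  scal : R -> car -> car;
  norm : car -> R;
  add_assoc : forall x y z, add x (add y z) = add (add x y) z;
  add_comm : forall x y, add x y = add y x;
  add_0_l : forall x, add zero x = x;
  add_opp_r : forall x, add x (opp x) = zero;
  scal_assoc : forall a b x, scal a (scal b x) = scal (a * b) x;
  scal_1 : forall x, scal 1 x = x;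
  scal_distr_l : forall a x y, scal a (add x y) = add (scal a x) (scal a y);
  scal_distr_r : forall a b x, scal (a + b) x = add (scal a x) (scal b x);
  norm_ax : is_norm zero add scal norm
}.

Arguments zero {_}.
Arguments add {_}.
Arguments opp {_}.
Arguments scal {_}.
Arguments norm {_}.

Definition sub {X : NormedSpace} (x y : X) : X := add x (opp y).

Definition complete (X : NormedSpace) : Prop :=
  forall u : nat -> X,
    (forall eps, 0 < eps -> exists N : nat, forall i j : nat,
        (N <= i)%nat -> (N <= j)%nat -> norm (sub (u i) (u j)) < eps) ->
    exists l : X, forall eps, 0 < eps -> exists N : nat, forall i : nat,
        (N <= i)%nat -> norm (sub (u i) l) < eps.

Definition is_norm_on (X : NormedSpace) (f : X -> R) : Prop :=
  is_norm (@zero X) add scal f.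

Definition equiv_norm (X : NormedSpace) (f : X -> R) : Prop :=
  exists c C : R, 0 < c /\ 0 < C /\
    forall x : X, c * norm x <= f x /\ f x <= C * norm x.

Definition is_linear (X : NormedSpace) (L : X -> X) : Prop :=
  (forall x y, L (add x y) = add (L x) (L y)) /\
  (forall a x, L (scal a x) = scal a (L x)).

Definition bounded_linear (X : NormedSpace) (L : X -> X) : Prop :=
  is_linear X L /\ exists C : R, forall x, norm (L x) <= C * norm x.

Definition seqR := Z -> R.

Definition is_banach_seq_space (B : seqR -> Prop) (nB : seqR -> R) : Prop :=
  B (fun _ => 0) /\
  (forall s t, B s -> B t -> B (fun n => s n + t n)) /\
  (forall a s, B s -> B (fun n => a * s n)) /\
  (forall s, B s -> 0 <= nB s) /\
  (forall s, B s -> nB s = 0 -> forall n, s n = 0) /\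
  (forall a s, B s -> nB (fun n => a * s n) = Rabs a * nB s) /\
  (forall s t, B s -> B t -> nB (fun n => s n + t n) <= nB s + nB t) /\
  (forall s s', B s' -> (forall n, Rabs (s n) <= Rabs (s' n)) -> B s /\ nB s <= nB s') /\
  (forall u : nat -> seqR, (forall k, B (u k)) ->
    (forall eps, 0 < eps -> exists N : nat, forall i j : nat,
        (N <= i)%nat -> (N <= j)%nat -> nB (fun n => u i n - u j n) < eps) ->
    exists l : seqR, B l /\ forall eps, 0 < eps -> exists N : nat, forall i : nat,
        (N <= i)%nat -> nB (fun n => u i n - l n) < eps).

Definition chi (m : Z) : seqR := fun n => if Z.eq_dec n m then 1 else 0.

Definition admissible (B : seqR -> Prop) (nB : seqR -> R) : Prop :=
  (forall n, B (chi n) /\ 0 < nB (chi n)) /\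
  exists N : R, 0 < N /\ forall s m, B s ->
    B (fun n => s (n + m)%Z) /\ nB (fun n => s (n + m)%Z) <= N * nB s.

Definition inY (X : NormedSpace) (nrm : Z -> X -> R) (B : seqR -> Prop)
  (x : Z -> X) : Prop := B (fun n => nrm n (x n)).

Definition YB_norm (X : NormedSpace) (nrm : Z -> X -> R) (nB : seqR -> R)
  (x : Z -> X) : R := nB (fun n => nrm n (x n)).

Definition TB (X : NormedSpace) (A : Z -> X -> X) (x : Z -> X) : Z -> X :=
  fun n => sub (x n) (A (n - 1)%Z (x (n - 1)%Z)).

Definition inDTB (X : NormedSpace) (A : Z -> X -> X) (nrm : Z -> X -> R)
  (B : seqR -> Prop) (x : Z -> X) : Prop :=
  inY X nrm B x /\ inY X nrm B (TB X A x).

Definition TB_bijective (X : NormedSpace) (A : Z -> X -> X) (nrm : Z -> X -> R)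
  (B : seqR -> Prop) : Prop :=
  (forall x1 x2, inDTB X A nrm B x1 -> inDTB X A nrm B x2 ->
     (forall n, TB X A x1 n = TB X A x2 n) -> forall n, x1 n = x2 n) /\
  (forall y, inY X nrm B y ->
     exists x, inDTB X A nrm B x /\ forall n, TB X A x n = y n).

Fixpoint evol {X : NormedSpace} (A : Z -> X -> X) (m : Z) (k : nat) (x : X) : X :=
  match k with
  | O => x
  | S k' => A (m + Z.of_nat k')%Z (evol A m k' x)
  end.

(* Acal A n m = A_{n-1} ... A_m  for n >= m, Acal A m m = Id *)
Definition Acal {X : NormedSpace} (A : Z -> X -> X) (n m : Z) : X -> X :=
  evol A m (Z.to_nat (n - m)).

Definition exp_dichotomy (X : NormedSpace) (A : Z -> X -> X) (nrm : Z -> X -> R) : Prop :=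
  exists P : Z -> X -> X,
    (forall m, is_linear X (P m)) /\
    (forall m x, P m (P m x) = P m x) /\
    (forall m x, A m (P m x) = P (m + 1)%Z (A m x)) /\
    (forall m, (forall x y, P m x = zero -> P m y = zero -> A m x = A m y -> x = y) /\
               (forall y, P (m + 1)%Z y = zero -> exists x, P m x = zero /\ A m x = y)) /\
    exists D lam mu : R, 0 < D /\ 0 < lam /\ lam < 1 /\ 1 < mu /\
      (forall n m (x : X), (m <= n)%Z ->
         nrm n (Acal A n m (P m x)) <= D * powerRZ lam (n - m) * nrm m x) /\
      (* for n <= m: Acal(n,m) Q_m x is the unique y in ker P_n with
         Acal(m,n) y = Q_m x *)
      (forall n m (x y : X), (n <= m)%Z -> P n y = zero ->
         Acal A m n y = sub x (P m x) ->
         nrm n y <= D * powerRZ mu (n - m) * nrm m x).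

(* Main.v *)
Require Import Defs.
From Stdlib Require Import Reals ZArith Lra Lia FunctionalExtensionality Classical ClassicalEpsilon.
Open Scope R_scope.

Section Vec.
Context {X : NormedSpace}.
Implicit Types x y z a b c d : X.

Lemma add_0_r x : add x zero = x.
Proof. rewrite add_comm; apply add_0_l. Qed.
Lemma add_opp_l x : add (opp x) x = zero.
Proof. rewrite add_comm; apply add_opp_r. Qed.
Lemma add_cancel_l a b c : add a b = add a c -> b = c.
Proof.
  intros H. rewrite <- (add_0_l _ b), <- (add_0_l _ c), <- (add_opp_l a),
  <- !add_assoc, H. reflexivity.
Qed.
Lemma opp_unique a b : add a b = zero -> b = opp a.
Proof. intros H. apply (add_cancel_l a). rewrite H, add_opp_r. reflexivity. Qed.
Lemma opp_opp a : opp (opp a) = a.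
Proof. symmetry. apply opp_unique. apply add_opp_l. Qed.
Lemma opp_zero : opp (@zero X) = zero.
Proof. symmetry. apply opp_unique. apply add_0_l. Qed.
Lemma add_swap4 a b c d : add (add a b) (add c d) = add (add a c) (add b d).
Proof.
  rewrite <- !add_assoc. f_equal. rewrite !add_assoc. f_equal. apply add_comm.
Qed.
Lemma opp_add a b : opp (add a b) = add (opp a) (opp b).
Proof.
  symmetry. apply opp_unique. rewrite add_swap4, !add_opp_r, add_0_l. reflexivity.
Qed.
Lemma scal_0_l a : scal 0 a = zero.
Proof.
  apply (add_cancel_l (scal 0 a)). rewrite <- scal_distr_r, Rplus_0_l, add_0_r. reflexivity.
Qed.
Lemma scal_0_r r : scal r (@zero X) = zero.
Proof.
  apply (add_cancel_l (scal r zero)). rewrite <- scal_distr_l, !add_0_r. reflexivity.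
Qed.
Lemma scal_m1 a : scal (-1) a = opp a.
Proof.
  apply opp_unique. rewrite <- (scal_1 _ a) at 1. rewrite <- scal_distr_r.
  replace (1 + -1) with 0 by ring. apply scal_0_l.
Qed.
Lemma scal_opp r a : scal r (opp a) = opp (scal r a).
Proof. rewrite <- !scal_m1, !scal_assoc. f_equal. ring. Qed.
Lemma opp_scal r a : scal (- r) a = opp (scal r a).
Proof. rewrite <- !scal_m1, !scal_assoc. f_equal. ring. Qed.
Lemma sub_eq_zero a b : sub a b = zero -> a = b.
Proof. unfold sub. intros H. apply opp_unique in H. rewrite <- (opp_opp a), <- H, opp_opp. reflexivity. Qed.
Lemma sub_self a : sub a a = zero.
Proof. apply add_opp_r. Qed.
Lemma sub_0_r a : sub a zero = a.
Proof. unfold sub. rewrite opp_zero. apply add_0_r. Qed.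
Lemma sub_0_l a : sub zero a = opp a.
Proof. unfold sub. apply add_0_l. Qed.
Lemma sub_add_add a b c d : sub (add a b) (add c d) = add (sub a c) (sub b d).
Proof. unfold sub. rewrite opp_add. apply add_swap4. Qed.
Lemma sub_sub_sub a b c d : sub (sub a b) (sub c d) = sub (sub a c) (sub b d).
Proof. unfold sub. rewrite !opp_add. apply add_swap4. Qed.
Lemma scal_sub_distr r a b : scal r (sub a b) = sub (scal r a) (scal r b).
Proof. unfold sub. rewrite scal_distr_l, scal_opp. reflexivity. Qed.
Lemma scal_sub_r r s a : sub (scal r a) (scal s a) = scal (r - s) a.
Proof. unfold sub. rewrite <- opp_scal, <- scal_distr_r. reflexivity. Qed.
Lemma opp_sub a b : opp (sub a b) = sub b a.
Proof. unfold sub. rewrite opp_add, opp_opp, add_comm. reflexivity. Qed.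
Lemma sub_add_cancel a b : add (sub a b) b = a.
Proof. unfold sub. rewrite <- add_assoc, add_opp_l, add_0_r. reflexivity. Qed.
Lemma add_sub_cancel a b : sub (add a b) b = a.
Proof. unfold sub. rewrite <- add_assoc, add_opp_r, add_0_r. reflexivity. Qed.
Lemma sub_tele a b c : add (sub a b) (sub b c) = sub a c.
Proof. unfold sub. rewrite <- add_assoc, (add_assoc _ (opp b)), add_opp_l, add_0_l. reflexivity. Qed.
Lemma sub_opp_r a b : sub a (opp b) = add a b.
Proof. unfold sub. rewrite opp_opp. reflexivity. Qed.
Lemma sub_add_l a b : sub (add a b) a = b.
Proof. rewrite add_comm. apply add_sub_cancel. Qed.

Section Norm.
Variable f : X -> R.
Hypothesis Hf : is_norm zero add scal f.
Lemma f_ge0 x : 0 <= f x. Proof. apply Hf. Qed.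
Lemma f_scal r x : f (scal r x) = Rabs r * f x. Proof. apply Hf. Qed.
Lemma f_add x y : f (add x y) <= f x + f y. Proof. apply Hf. Qed.
Lemma f_eq0 x : f x = 0 -> x = zero. Proof. apply Hf. Qed.
Lemma f_zero : f zero = 0.
Proof. rewrite <- (scal_0_l zero), f_scal, Rabs_R0. ring. Qed.
Lemma f_opp x : f (opp x) = f x.
Proof. rewrite <- scal_m1, f_scal, Rabs_left by lra. ring. Qed.
Lemma f_sub x y : f (sub x y) <= f x + f y.
Proof. unfold sub. rewrite <- (f_opp y). apply f_add. Qed.
Lemma f_sub_comm x y : f (sub x y) = f (sub y x).
Proof. rewrite <- opp_sub. apply f_opp. Qed.
Lemma f_tri x y z : f (sub x z) <= f (sub x y) + f (sub y z).
Proof. rewrite <- (sub_tele x y z). apply f_add. Qed.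
Lemma f_rev x y : f x <= f y + f (sub x y).
Proof. rewrite <- (sub_add_cancel x y) at 1. rewrite add_comm. apply f_add. Qed.
End Norm.

Section Lin.
Variable L : X -> X.
Hypothesis HL : is_linear X L.
Lemma L_add x y : L (add x y) = add (L x) (L y). Proof. apply HL. Qed.
Lemma L_scal r x : L (scal r x) = scal r (L x). Proof. apply HL. Qed.
Lemma L_zero : L zero = zero.
Proof. rewrite <- (scal_0_l zero) at 1. rewrite L_scal, scal_0_l. reflexivity. Qed.
Lemma L_opp x : L (opp x) = opp (L x).
Proof. rewrite <- !scal_m1. apply L_scal. Qed.
Lemma L_sub x y : L (sub x y) = sub (L x) (L y).
Proof. unfold sub. rewrite L_add, L_opp. reflexivity. Qed.
End Lin.
End Vec.
Lemma sub_sub_self {X : NormedSpace} (a b : X) : sub a (sub a b) = b.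
Proof. unfold sub. rewrite opp_add, opp_opp, add_assoc, add_opp_r, add_0_l. reflexivity. Qed.
Lemma sub_eq_iff {X : NormedSpace} (a b v : X) : sub a b = v -> b = sub a v.
Proof. intros H. rewrite <- H, sub_sub_self. reflexivity. Qed.
Lemma sub_sub_r {X : NormedSpace} (a b c : X) : sub a (sub b c) = sub (add c a) b.
Proof.
  unfold sub. rewrite opp_add, opp_opp. rewrite (add_comm _ (opp b) c), add_assoc, (add_comm _ a c).
  reflexivity.
Qed.
Lemma add_sub_assoc' {X : NormedSpace} (y r a : X) : add (sub y r) a = sub y (sub r a).
Proof.
  unfold sub. rewrite opp_add, opp_opp, <- add_assoc. reflexivity.
Qed.
Lemma scal_inv_id {X : NormedSpace} (t : R) (a b c : X) : t <> 0 ->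
  sub a (scal (/t) (sub b c)) = scal (/t) (sub (add c (scal t a)) b).
Proof.
  intros Ht. rewrite !scal_sub_distr, scal_distr_l, scal_assoc, Rinv_l, scal_1 by exact Ht.
  apply sub_sub_r.
Qed.
Lemma sub_sub_l {X : NormedSpace} (a b : X) : sub (sub a b) a = opp b.
Proof. unfold sub. rewrite (add_comm _ a (opp b)), <- add_assoc, add_opp_r, add_0_r. reflexivity. Qed.

From Stdlib Require Import Reals ZArith Lra Lia FunctionalExtensionality Classical ClassicalEpsilon.

Section Base.
Context (X : NormedSpace) (nrm : Z -> X -> R) (A : Z -> X -> X)
  (B : seqR -> Prop) (nB : seqR -> R).
Hypothesis HX : complete X.
Hypothesis HB : is_banach_seq_space B nB.
Hypothesis Hadm : admissible B nB.
Hypothesis Hn : forall m, is_norm_on X (nrm m) /\ equiv_norm X (nrm m).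
Hypothesis HA : forall m, bounded_linear X (A m).
Hypothesis HT : TB_bijective X A nrm B.

Lemma nrmN m : is_norm zero add scal (nrm m). Proof. apply (Hn m). Qed.
Lemma A_lin m : is_linear X (A m). Proof. apply (HA m). Qed.

Lemma B_zero : B (fun _ => 0). Proof. apply HB. Qed.
Lemma B_add s t : B s -> B t -> B (fun n => s n + t n). Proof. apply HB. Qed.
Lemma B_scal a s : B s -> B (fun n => a * s n). Proof. apply HB. Qed.
Lemma nB_ge0 s : B s -> 0 <= nB s. Proof. apply HB. Qed.
Lemma nB_eq0 s : B s -> nB s = 0 -> forall n, s n = 0. Proof. apply HB. Qed.
Lemma nB_scal a s : B s -> nB (fun n => a * s n) = Rabs a * nB s. Proof. apply HB. Qed.
Lemma nB_tri s t : B s -> B t -> nB (fun n => s n + t n) <= nB s + nB t. Proof. apply HB. Qed.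
Lemma B_solid s s' : B s' -> (forall n, Rabs (s n) <= Rabs (s' n)) -> B s /\ nB s <= nB s'.
Proof. apply HB. Qed.

Lemma B_chi n : B (chi n). Proof. apply Hadm. Qed.
Definition c n := nB (chi n).
Lemma c_pos n : 0 < c n. Proof. apply Hadm. Qed.

Lemma pt_bound s n : B s -> Rabs (s n) * c n <= nB s.
Proof.
  intros Hs.
  destruct (B_solid (fun k => s n * chi n k) s Hs) as [_ H].
  { intros k. unfold chi. destruct (Z.eq_dec k n) as [->|]. rewrite Rmult_1_r; lra.
    rewrite Rmult_0_r, Rabs_R0. apply Rabs_pos. }
  rewrite nB_scal in H by apply B_chi. unfold c. lra.
Qed.

Lemma c_ratio : exists N, 1 <= N /\ forall m n, c m <= N * c n.
Proof.
  destruct Hadm as [_ [N [HN Hs]]].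
  exists (Rmax N 1). split. apply Rmax_r.
  intros m n. destruct (Hs (chi n) (n - m)%Z (B_chi n)) as [_ H].
  replace (fun k => chi n (k + (n - m))%Z) with (chi m) in H.
  2:{ apply functional_extensionality. intros k. unfold chi.
      destruct (Z.eq_dec k m), (Z.eq_dec (k + (n - m)) n); auto; lia. }
  unfold c. pose proof (c_pos n). unfold c in H0.
  eapply Rle_trans. apply H. apply Rmult_le_compat_r. lra. apply Rmax_l.
Qed.

Definition nu (x : Z -> X) : seqR := fun n => nrm n (x n).
Definition Y x := inY X nrm B x.
Definition nY x := YB_norm X nrm nB x.
Definition T x := TB X A x.
Definition D x := inDTB X A nrm B x.

Lemma nY_ge0 x : Y x -> 0 <= nY x.
Proof. apply nB_ge0. Qed.

Lemma Y_solid x y a : Y x -> 0 <= a -> (forall n, nrm n (y n) <= a * nrm n (x n)) ->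
  Y y /\ nY y <= a * nY x.
Proof.
  intros Hx Ha H.
  destruct (B_solid (fun n => nrm n (y n)) (fun n => a * nrm n (x n)) (B_scal a _ Hx)) as [H1 H2].
  { intros n. pose proof (f_ge0 _ (nrmN n) (x n)). pose proof (f_ge0 _ (nrmN n) (y n)).
    rewrite !Rabs_pos_eq. apply H. apply Rmult_le_pos; auto. auto. }
  split. exact H1. unfold nY, YB_norm. rewrite nB_scal in H2 by exact Hx.
  rewrite Rabs_pos_eq in H2 by exact Ha. exact H2.
Qed.

Lemma Y_solid2 x1 x2 y : Y x1 -> Y x2 ->
  (forall n, nrm n (y n) <= nrm n (x1 n) + nrm n (x2 n)) ->
  Y y /\ nY y <= nY x1 + nY x2.
Proof.
  intros H1 H2 H.
  destruct (B_solid (fun n => nrm n (y n)) (fun n => nrm n (x1 n) + nrm n (x2 n)) (B_add _ _ H1 H2)) as [G1 G2].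
  { intros n. pose proof (f_ge0 _ (nrmN n) (x1 n)). pose proof (f_ge0 _ (nrmN n) (x2 n)).
    pose proof (f_ge0 _ (nrmN n) (y n)). specialize (H n).
    rewrite !Rabs_pos_eq; lra. }
  split. exact G1. eapply Rle_trans. apply G2. apply nB_tri; auto.
Qed.

Lemma Y_zero : Y (fun _ => zero).
Proof.
  unfold Y, inY. replace (fun n : Z => nrm n zero) with (fun _ : Z => 0). apply B_zero.
  apply functional_extensionality. intros n. symmetry. apply f_zero, nrmN.
Qed.

Lemma Y_add x y : Y x -> Y y -> Y (fun n => add (x n) (y n)) /\
  nY (fun n => add (x n) (y n)) <= nY x + nY y.
Proof. intros. apply Y_solid2; auto. intros n. apply f_add, nrmN. Qed.
Lemma Y_sub x y : Y x -> Y y -> Y (fun n => sub (x n) (y n)) /\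
  nY (fun n => sub (x n) (y n)) <= nY x + nY y.
Proof. intros. apply Y_solid2; auto. intros n. apply f_sub, nrmN. Qed.
Lemma Y_scal r x : Y x -> Y (fun n => scal r (x n)) /\ nY (fun n => scal r (x n)) <= Rabs r * nY x.
Proof. intros. apply Y_solid; auto. apply Rabs_pos. intros n. rewrite f_scal by apply nrmN. lra. Qed.
Lemma Y_opp x : Y x -> Y (fun n => opp (x n)) /\ nY (fun n => opp (x n)) = nY x.
Proof.
  intros Hx. unfold Y, inY, nY, YB_norm.
  replace (fun n => nrm n (opp (x n))) with (fun n => nrm n (x n)). auto.
  apply functional_extensionality. intros n. symmetry. apply f_opp, nrmN.
Qed.
Lemma nY_sub_comm x y : nY (fun n => sub (x n) (y n)) = nY (fun n => sub (y n) (x n)).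
Proof.
  unfold nY, YB_norm. f_equal. apply functional_extensionality. intros n. apply f_sub_comm, nrmN.
Qed.
Lemma nY_tri x y z : Y x -> Y y -> Y z ->
  nY (fun n => sub (x n) (z n)) <= nY (fun n => sub (x n) (y n)) + nY (fun n => sub (y n) (z n)).
Proof.
  intros Hx Hy Hz. apply Y_solid2. apply Y_sub; auto. apply Y_sub; auto.
  intros n. apply f_tri, nrmN.
Qed.

Lemma Y_pt x n : Y x -> nrm n (x n) * c n <= nY x.
Proof.
  intros Hx. pose proof (pt_bound _ n Hx). rewrite Rabs_pos_eq in H. exact H.
  apply f_ge0, nrmN.
Qed.

Lemma nY_eq0 x : Y x -> nY x = 0 -> forall n, x n = zero.
Proof. intros Hx H n. apply (f_eq0 _ (nrmN n)). apply (nB_eq0 _ Hx H). Qed.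

Definition e (m : Z) (v : X) : Z -> X := fun k => if Z.eq_dec k m then v else zero.

Lemma Y_e m v : Y (e m v) /\ nY (e m v) = nrm m v * c m.
Proof.
  assert (E : nu (e m v) = fun k => nrm m v * chi m k).
  { apply functional_extensionality. intros k. unfold nu, e, chi.
    destruct (Z.eq_dec k m) as [->|]. ring. rewrite f_zero by apply nrmN. ring. }
  unfold Y, inY, nY, YB_norm. fold (nu (e m v)). rewrite E. split. apply B_scal, B_chi.
  rewrite nB_scal by apply B_chi. rewrite Rabs_pos_eq. reflexivity. apply f_ge0, nrmN.
Qed.

Lemma T_add x y n : T (fun k => add (x k) (y k)) n = add (T x n) (T y n).
Proof. unfold T, TB. rewrite L_add by apply A_lin. apply sub_add_add. Qed.
Lemma T_sub x y n : T (fun k => sub (x k) (y k)) n = sub (T x n) (T y n).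
Proof. unfold T, TB. rewrite L_sub by apply A_lin. apply sub_sub_sub. Qed.
Lemma T_scal r x n : T (fun k => scal r (x k)) n = scal r (T x n).
Proof. unfold T, TB. rewrite L_scal by apply A_lin. rewrite scal_sub_distr. reflexivity. Qed.
Lemma T_opp x n : T (fun k => opp (x k)) n = opp (T x n).
Proof. unfold T, TB. rewrite L_opp by apply A_lin. unfold sub. rewrite opp_add. reflexivity. Qed.

Lemma D_intro x : Y x -> Y (T x) -> D x.
Proof. intros; split; auto. Qed.

Lemma uniq x x' : D x -> D x' -> (forall n, T x n = T x' n) -> x = x'.
Proof. intros. apply functional_extensionality. apply (proj1 HT); auto. Qed.

Lemma ex_G y : exists x, Y y -> D x /\ forall n, T x n = y n.
Proof.
  destruct (classic (Y y)) as [Hy|Hy].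
  - destruct (proj2 HT y Hy) as [x Hx]. exists x. auto.
  - exists (fun _ => zero). intros; contradiction.
Qed.
Definition G (y : Z -> X) : Z -> X := proj1_sig (constructive_indefinite_description _ (ex_G y)).
Lemma G_spec y : Y y -> D (G y) /\ forall n, T (G y) n = y n.
Proof. unfold G. destruct (constructive_indefinite_description _ (ex_G y)). simpl. auto. Qed.
Lemma G_uniq x y : D x -> Y y -> (forall n, T x n = y n) -> G y = x.
Proof.
  intros Hx Hy H. destruct (G_spec y Hy) as [H1 H2]. apply uniq; auto.
  intros n. rewrite H, H2. reflexivity.
Qed.


Lemma A_zero m : A m zero = zero. Proof. apply L_zero, A_lin. Qed.

Lemma Te_m m v : Y (T (e m v)).
Proof.
  assert (E : T (e m v) = fun k => sub (e m v k) (e (m+1) (A m v) k)).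
  { apply functional_extensionality. intros k. unfold T, TB, e.
    destruct (Z.eq_dec (k-1) m) as [E|E]; destruct (Z.eq_dec k (m+1)) as [E'|E']; try lia.
    rewrite E. reflexivity. rewrite A_zero. reflexivity. }
  rewrite E. apply Y_sub; apply Y_e.
Qed.

Lemma T_e m v k : T (e m v) k = sub (e m v k) (e (m+1) (A m v) k).
Proof.
  unfold T, TB, e.
  destruct (Z.eq_dec (k-1) m) as [E|E]; destruct (Z.eq_dec k (m+1)) as [E'|E']; try lia.
  rewrite E. reflexivity. rewrite A_zero. reflexivity.
Qed.

Lemma G_add y1 y2 : Y y1 -> Y y2 ->
  G (fun k => add (y1 k) (y2 k)) = fun k => add (G y1 k) (G y2 k).
Proof.
  intros H1 H2. destruct (G_spec _ H1) as [[D1 D1'] T1]. destruct (G_spec _ H2) as [[D2 D2'] T2].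
  apply G_uniq. split. apply Y_add; auto.
  unfold Y. replace (TB X A (fun k => add (G y1 k) (G y2 k))) with (fun k => add (y1 k) (y2 k)).
  apply Y_add; auto. apply functional_extensionality; intros n. symmetry. fold T.
  rewrite T_add, T1, T2. reflexivity.
  apply Y_add; auto. intros n. rewrite T_add, T1, T2. reflexivity.
Qed.

Lemma G_scal r y : Y y -> G (fun k => scal r (y k)) = fun k => scal r (G y k).
Proof.
  intros H1. destruct (G_spec _ H1) as [[D1 D1'] T1].
  apply G_uniq. split. apply Y_scal; auto.
  unfold Y. replace (TB X A (fun k => scal r (G y k))) with (fun k => scal r (y k)).
  apply Y_scal; auto. apply functional_extensionality; intros n. symmetry. fold T.
  rewrite T_scal, T1. reflexivity.
  apply Y_scal; auto. intros n. rewrite T_scal, T1. reflexivity.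
Qed.

Lemma e_add m a b : e m (add a b) = fun k => add (e m a k) (e m b k).
Proof.
  apply functional_extensionality; intros k. unfold e. destruct (Z.eq_dec k m); auto.
  rewrite add_0_l. reflexivity.
Qed.
Lemma e_scal m r a : e m (scal r a) = fun k => scal r (e m a k).
Proof.
  apply functional_extensionality; intros k. unfold e. destruct (Z.eq_dec k m); auto.
  rewrite scal_0_r. reflexivity.
Qed.

Definition P m v := G (e m v) m.

Lemma P_lin m : is_linear X (P m).
Proof.
  split.
  - intros a b. unfold P. rewrite e_add, G_add by apply Y_e. reflexivity.
  - intros r a. unfold P. rewrite e_scal, G_scal by apply Y_e. reflexivity.
Qed.

Lemma sol_Y m v : Y (G (e m v)). Proof. apply (G_spec _ (proj1 (Y_e m v))). Qed.
Lemma sol_D m v : D (G (e m v)). Proof. apply (G_spec _ (proj1 (Y_e m v))). Qed.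
Lemma sol_T m v k : T (G (e m v)) k = e m v k. Proof. apply (G_spec _ (proj1 (Y_e m v))). Qed.
Lemma sol_T_eq m v : T (G (e m v)) = e m v.
Proof. apply functional_extensionality. apply sol_T. Qed.

Lemma T_zero_eq u k : T u k = zero -> u k = A (k-1)%Z (u (k-1)%Z).
Proof. intros H. apply sub_eq_zero. exact H. Qed.

Lemma sol_rec m v k : k <> m -> G (e m v) k = A (k-1)%Z (G (e m v) (k-1)%Z).
Proof.
  intros H. apply T_zero_eq. rewrite sol_T. unfold e. destruct (Z.eq_dec k m); auto; lia.
Qed.
Lemma sol_m m v : A (m-1)%Z (G (e m v) (m-1)%Z) = sub (G (e m v) m) v.
Proof.
  pose proof (sol_T m v m) as H. unfold T, TB, e in H. destruct (Z.eq_dec m m); [|lia].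
  apply sub_eq_iff. exact H.
Qed.

Lemma sol_evol u a k : (forall i : nat, (i < k)%nat -> u (a + Z.of_nat i + 1)%Z = A (a + Z.of_nat i)%Z (u (a + Z.of_nat i)%Z)) ->
  u (a + Z.of_nat k)%Z = evol A a k (u a).
Proof.
  induction k as [|k IH]; intros H.
  - simpl. rewrite Z.add_0_r. reflexivity.
  - replace (a + Z.of_nat (S k))%Z with (a + Z.of_nat k + 1)%Z by lia.
    rewrite H by lia. cbn [evol]. rewrite IH by (intros; apply H; lia). reflexivity.
Qed.

Lemma evol_lin a k : is_linear X (evol A a k).
Proof.
  induction k as [|k IH]; split; intros; simpl; auto.
  - rewrite (L_add _ IH), L_add by apply A_lin. reflexivity.
  - rewrite (L_scal _ IH), L_scal by apply A_lin. reflexivity.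
Qed.

Lemma evol_comp a i j v : evol A a (i + j) v = evol A (a + Z.of_nat i)%Z j (evol A a i v).
Proof.
  induction j as [|j IH].
  - rewrite Nat.add_0_r. reflexivity.
  - rewrite Nat.add_succ_r. simpl. rewrite IH. f_equal. lia.
Qed.

Definition Lt (q : Z) (u : Z -> X) : Z -> X := fun k => if Z_lt_dec k q then u k else zero.
Definition Rt (q : Z) (u : Z -> X) : Z -> X := fun k => if Z_lt_dec k q then zero else u k.

Lemma Y_Lt q u : Y u -> Y (Lt q u).
Proof.
  intros H. refine (proj1 (Y_solid u _ 1 H ltac:(lra) _)). intros k. unfold Lt.
  destruct (Z_lt_dec k q). lra. rewrite f_zero by apply nrmN. rewrite Rmult_1_l. apply f_ge0, nrmN.
Qed.
Lemma Y_Rt q u : Y u -> Y (Rt q u).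
Proof.
  intros H. refine (proj1 (Y_solid u _ 1 H ltac:(lra) _)). intros k. unfold Rt.
  destruct (Z_lt_dec k q). rewrite f_zero by apply nrmN. rewrite Rmult_1_l. apply f_ge0, nrmN. lra.
Qed.

Lemma LtSol u q : Y u -> (forall k, (k <= q)%Z -> T u k = zero) ->
  G (e q (opp (u q))) = Lt q u.
Proof.
  intros Hu H.
  assert (E : T (Lt q u) = e q (opp (u q))).
  { apply functional_extensionality. intros k. unfold T, TB, Lt, e.
    destruct (Z_lt_dec k q); destruct (Z_lt_dec (k-1) q); destruct (Z.eq_dec k q); try lia.
    - apply H. lia.
    - subst k. rewrite (T_zero_eq u q (H q ltac:(lia))), sub_0_l. reflexivity.
    - rewrite A_zero. apply sub_self. }
  apply G_uniq. split. apply Y_Lt; auto. unfold Y. fold (T (Lt q u)). rewrite E. apply Y_e.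
  apply Y_e. rewrite E. auto.
Qed.

Lemma P_idem m v : P m (P m v) = P m v.
Proof.
  unfold P. set (u := G (e m v)).
  assert (E : T (Rt m u) = e m (u m)).
  { apply functional_extensionality. intros k. unfold T, TB, Rt, e.
    destruct (Z_lt_dec k m); destruct (Z_lt_dec (k-1) m); destruct (Z.eq_dec k m); try lia.
    - rewrite A_zero. apply sub_self.
    - subst k. rewrite A_zero. apply sub_0_r.
    - pose proof (sol_T m v k) as Hk. unfold T, TB, e in Hk. destruct (Z.eq_dec k m); [lia|]. exact Hk. }
  assert (G (e m (u m)) = Rt m u).
  { apply G_uniq. split. apply Y_Rt, sol_Y. unfold Y. fold (T (Rt m u)). rewrite E. apply Y_e.
    apply Y_e. rewrite E. auto. }
  rewrite H. unfold Rt. destruct (Z_lt_dec m m); [lia|]. reflexivity.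
Qed.

Lemma P_inv m v : A m (P m v) = P (m+1)%Z (A m v).
Proof.
  unfold P. set (u := G (e m v)).
  assert (E : T (fun k => sub (u k) (e m v k)) = e (m+1) (A m v)).
  { apply functional_extensionality. intros k. rewrite T_sub. unfold u. rewrite sol_T, T_e.
    apply sub_sub_self. }
  assert (G (e (m+1) (A m v)) = fun k => sub (u k) (e m v k)).
  { apply G_uniq. split. apply Y_sub. apply sol_Y. apply Y_e. unfold Y. fold (T (fun k => sub (u k) (e m v k))).
    rewrite E. apply Y_e. apply Y_e. rewrite E. auto. }
  rewrite H. cbv beta. unfold e at 1. destruct (Z.eq_dec (m+1) m); [lia|]. rewrite sub_0_r.
  unfold u. rewrite (sol_rec m v (m+1)) by lia. replace (m+1-1)%Z with m by lia. reflexivity.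
Qed.

Lemma P_zero m : P m zero = zero. Proof. apply L_zero, P_lin. Qed.

Lemma P_ker_inj m x y : P m x = zero -> P m y = zero -> A m x = A m y -> x = y.
Proof.
  intros Hx Hy HAe. set (d := sub x y).
  assert (Pd : P m d = zero). { unfold d. rewrite (L_sub _ (P_lin m)), Hx, Hy. apply sub_self. }
  assert (Ad : A m d = zero). { unfold d. rewrite (L_sub _ (A_lin m)), HAe. apply sub_self. }
  set (u := G (e m d)).
  assert (um : u m = zero) by exact Pd.
  assert (E1 : T (Lt m u) = e m d).
  { apply functional_extensionality. intros k. unfold T, TB, Lt, e.
    destruct (Z_lt_dec k m); destruct (Z_lt_dec (k-1) m); destruct (Z.eq_dec k m); try lia.
    - pose proof (sol_T m d k) as Hk. unfold T, TB, e in Hk. destruct (Z.eq_dec k m); [lia|]. exact Hk.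
    - subst k. unfold u. rewrite sol_m. fold u. rewrite um, sub_0_l, sub_0_l, opp_opp. reflexivity.
    - rewrite A_zero. apply sub_self. }
  assert (E2 : T (e m d) = e m d).
  { apply functional_extensionality. intros k. rewrite T_e, Ad.
    replace (e (m+1) zero k) with (@zero X). apply sub_0_r. unfold e. destruct (Z.eq_dec k (m+1)); auto. }
  assert (Lt m u = e m d).
  { apply uniq. split. apply Y_Lt, sol_Y. unfold Y. fold (T (Lt m u)). rewrite E1. apply Y_e.
    split. apply Y_e. unfold Y. fold (T (e m d)). rewrite E2. apply Y_e.
    intros k. rewrite E1, E2. reflexivity. }
  assert (d = zero).
  { pose proof (f_equal (fun f => f m) H) as H'. simpl in H'. unfold Lt, e in H'.
    destruct (Z_lt_dec m m); [lia|]. destruct (Z.eq_dec m m); [|lia]. auto. }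
  apply sub_eq_zero. exact H0.
Qed.

Lemma P_ker_surj m y : P (m+1)%Z y = zero -> exists x, P m x = zero /\ A m x = y.
Proof.
  intros Hy. set (u := G (e (m+1) y)).
  assert (HL : G (e m (opp (u m))) = Lt m u).
  { apply LtSol. apply sol_Y. intros k Hk. unfold u. rewrite sol_T. unfold e.
    destruct (Z.eq_dec k (m+1)); [lia|]. reflexivity. }
  exists (opp (u m)). split.
  - unfold P. rewrite HL. unfold Lt. destruct (Z_lt_dec m m); [lia|]. reflexivity.
  - rewrite (L_opp _ (A_lin m)). pose proof (sol_m (m+1) y) as H.
    replace (m+1-1)%Z with m in H by lia. fold u in H. rewrite H.
    unfold u. change (G (e (m+1) y) (m+1)%Z) with (P (m+1)%Z y). rewrite Hy, sub_0_l, opp_opp. reflexivity.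
Qed.

Lemma evol_img n j y : P n y = y -> P (n + Z.of_nat j)%Z (evol A n j y) = evol A n j y.
Proof.
  intros H. induction j as [|j IH].
  - simpl. rewrite Z.add_0_r. exact H.
  - replace (n + Z.of_nat (S j))%Z with (n + Z.of_nat j + 1)%Z by lia. cbn [evol].
    rewrite <- P_inv, IH. reflexivity.
Qed.
Lemma evol_ker n j y : P n y = zero -> P (n + Z.of_nat j)%Z (evol A n j y) = zero.
Proof.
  intros H. induction j as [|j IH].
  - simpl. rewrite Z.add_0_r. exact H.
  - replace (n + Z.of_nat (S j))%Z with (n + Z.of_nat j + 1)%Z by lia. cbn [evol].
    rewrite <- P_inv, IH. apply A_zero.
Qed.
Lemma evol_ker_inj n j y y' : P n y = zero -> P n y' = zero -> evol A n j y = evol A n j y' -> y = y'.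
Proof.
  intros H H'. induction j as [|j IH]; intros E.
  - exact E.
  - apply IH. cbn [evol] in E. apply (P_ker_inj (n + Z.of_nat j)); auto; apply evol_ker; auto.
Qed.

Lemma Rabs_IZR_le1 z : (-1 <= z <= 1)%Z -> Rabs (IZR z) <= 1.
Proof. intros H. assert (IZR (-1) <= IZR z) by (apply IZR_le; lia).
 assert (IZR z <= IZR 1) by (apply IZR_le; lia). apply Rabs_le.
 change (IZR (-1)) with (-(1)) in H0. change (IZR 1) with 1 in H1. lra. Qed.

Section Dich.
Variables N K : R.
Hypothesis HN1 : 1 <= N.
Hypothesis HN : forall m n, c m <= N * c n.
Hypothesis HK1 : 1 <= K.
Hypothesis HK : forall x, D x -> nY x <= K * nY (T x).

Definition M := K * K * N.
Lemma M_ge1 : 1 <= M.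
Proof. unfold M. assert (1 <= K * K) by nra. nra. Qed.

Lemma sol_nY m x : nY (G (e m x)) <= K * (nrm m x * c m).
Proof.
  pose proof (HK _ (sol_D m x)). rewrite sol_T_eq in H. rewrite (proj2 (Y_e m x)) in H. exact H.
Qed.

Lemma div_c a b n : a * c n <= b * c n -> a <= b.
Proof. intros H. apply (Rmult_le_reg_r (c n)). apply c_pos. exact H. Qed.

Lemma TBd m x n : nrm n (G (e m x) n) <= M * nrm m x.
Proof.
  apply (div_c _ _ n). pose proof (Y_pt _ n (sol_Y m x)). pose proof (sol_nY m x).
  pose proof (HN m n). pose proof (f_ge0 _ (nrmN m) x). pose proof (c_pos n). pose proof (c_pos m).
  unfold M. assert (K * N <= K * K * N).
  { assert (0 <= K * N) by (apply Rmult_le_pos; lra). assert (0 <= (K - 1) * (K * N)) by (apply Rmult_le_pos; lra). nra. }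
  assert (K * (nrm m x * c m) <= K * (nrm m x * (N * c n))).
  { apply Rmult_le_compat_l. lra. apply Rmult_le_compat_l; lra. }
  assert (K * (nrm m x * (N * c n)) <= K * K * N * nrm m x * c n).
  { replace (K * (nrm m x * (N * c n))) with ((K * N) * (nrm m x * c n)) by ring.
    replace (K * K * N * nrm m x * c n) with ((K * K * N) * (nrm m x * c n)) by ring.
    apply Rmult_le_compat_r. nra. lra. }
  lra.
Qed.

Lemma GW u m w W : Y u -> (forall k, k <> m -> u k = A (k-1)%Z (u (k-1)%Z)) -> 0 <= W ->
  (forall k, Rabs (w k) <= W) ->
  (forall k, (w (k-1)%Z = 0 /\ Rabs (w k) <= 1) \/ (k <> m /\ Rabs (w k - w (k-1)%Z) <= 1)) ->
  forall n, Rabs (w n) * nrm n (u n) * c n <= K * nY u.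
Proof.
  intros Hu Hrec HW Hw Hc n. set (z := fun k => scal (w k) (u k)).
  assert (Yz : Y z).
  { refine (proj1 (Y_solid u z W Hu HW _)). intros k. unfold z. rewrite f_scal by apply nrmN.
    apply Rmult_le_compat_r. apply f_ge0, nrmN. apply Hw. }
  assert (HTz : forall k, nrm k (T z k) <= 1 * nrm k (u k)).
  { intros k. pose proof (f_ge0 _ (nrmN k) (u k)). unfold T, TB, z. destruct (Hc k) as [[H0 H1]|[H0 H1]].
    - rewrite H0, scal_0_l, A_zero, sub_0_r, f_scal by apply nrmN. apply Rmult_le_compat_r; lra.
    - rewrite (L_scal _ (A_lin _)), <- Hrec by auto. rewrite scal_sub_r, f_scal by apply nrmN.
      apply Rmult_le_compat_r; lra. }
  destruct (Y_solid u (T z) 1 Hu ltac:(lra) HTz) as [YTz nTz].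
  pose proof (HK z (conj Yz YTz)). pose proof (Y_pt z n Yz). unfold z in H0 at 1.
  rewrite f_scal in H0 by apply nrmN. pose proof (nY_ge0 _ Hu). nra.
Qed.

Lemma sol_stab m x k : G (e m x) (m + Z.of_nat k)%Z = evol A m k (P m x).
Proof.
  apply sol_evol. intros i _. rewrite (sol_rec m x (m + Z.of_nat i + 1)) by lia.
  replace (m + Z.of_nat i + 1 - 1)%Z with (m + Z.of_nat i)%Z by lia. reflexivity.
Qed.

Lemma SE m x k : nrm (m + Z.of_nat k)%Z (evol A m k (P m x)) * (INR k + 1) <= M * nrm m x.
Proof.
  rewrite <- sol_stab. set (u := G (e m x)). set (n := (m + Z.of_nat k)%Z).
  set (w := fun j => if Z_lt_dec j m then 0 else IZR (Z.min (j - m + 1) (Z.of_nat k + 1))).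
  assert (Hwn : Rabs (w n) = INR k + 1).
  { unfold w, n. destruct (Z_lt_dec (m + Z.of_nat k) m); [lia|].
    replace (Z.min (m + Z.of_nat k - m + 1) (Z.of_nat k + 1)) with (Z.of_nat k + 1)%Z by lia.
    rewrite plus_IZR, <- INR_IZR_INZ. apply Rabs_pos_eq. pose proof (pos_INR k). lra. }
  assert (W0 : 0 <= IZR (Z.of_nat k + 1)) by (apply IZR_le; lia).
  pose proof (GW u m w (IZR (Z.of_nat k + 1)) (sol_Y m x) (sol_rec m x) W0) as H.
  assert (Hb : forall j, Rabs (w j) <= IZR (Z.of_nat k + 1)).
  { intros j. unfold w. destruct (Z_lt_dec j m). rewrite Rabs_R0; auto.
    rewrite Rabs_pos_eq. apply IZR_le; lia. apply IZR_le; lia. }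
  specialize (H Hb). assert (Hc : forall j, (w (j-1)%Z = 0 /\ Rabs (w j) <= 1) \/ (j <> m /\ Rabs (w j - w (j-1)%Z) <= 1)).
  { intros j. unfold w. destruct (Z_lt_dec j m); destruct (Z_lt_dec (j-1) m).
    - left. rewrite Rabs_R0. lra.
    - lia.
    - destruct (Z.eq_dec j m).
      + left. split. auto. apply Rabs_IZR_le1. lia.
      + lia.
    - right. split. lia. rewrite <- minus_IZR. apply Rabs_IZR_le1. lia. }
  specialize (H Hc n). rewrite Hwn in H.
  apply (div_c _ _ n). pose proof (sol_nY m x). fold u in H0.
  pose proof (HN m n). pose proof (f_ge0 _ (nrmN m) x). pose proof (c_pos n). pose proof (c_pos m).
  unfold M. pose proof (pos_INR k).
  assert (K * (K * (nrm m x * c m)) <= K * K * N * nrm m x * c n).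
  { replace (K * K * N * nrm m x * c n) with (K * K * nrm m x * (N * c n)) by ring.
    replace (K * (K * (nrm m x * c m))) with (K * K * nrm m x * c m) by ring.
    apply Rmult_le_compat_l. nra. lra. }
  nra.
Qed.

Lemma UE m x n : (n < m)%Z -> nrm n (G (e m x) n) * IZR (m - n) <= 2 * M * nrm m x.
Proof.
  intros Hnm. set (u := G (e m x)).
  set (w := fun j => if Z_lt_dec j m then IZR (Z.min (m-1-j) (m-1-n)) else 0).
  assert (Hwn : Rabs (w n) = IZR (m - 1 - n)).
  { unfold w. destruct (Z_lt_dec n m); [|lia].
    replace (Z.min (m-1-n) (m-1-n)) with (m-1-n)%Z by lia. apply Rabs_pos_eq. apply IZR_le; lia. }
  assert (W0 : 0 <= IZR (m - 1 - n)) by (apply IZR_le; lia).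
  pose proof (GW u m w _ (sol_Y m x) (sol_rec m x) W0) as H.
  assert (Hb : forall j, Rabs (w j) <= IZR (m - 1 - n)).
  { intros j. unfold w. destruct (Z_lt_dec j m). rewrite Rabs_pos_eq. apply IZR_le; lia. apply IZR_le; lia.
    rewrite Rabs_R0; auto. }
  specialize (H Hb). assert (Hc : forall j, (w (j-1)%Z = 0 /\ Rabs (w j) <= 1) \/ (j <> m /\ Rabs (w j - w (j-1)%Z) <= 1)).
  { intros j. unfold w. destruct (Z_lt_dec j m); destruct (Z_lt_dec (j-1) m).
    - right. split. lia. rewrite <- minus_IZR. apply Rabs_IZR_le1. lia.
    - lia.
    - destruct (Z.eq_dec j m).
      + left. split. replace (Z.min (m - 1 - (j - 1)) (m - 1 - n)) with 0%Z by lia. reflexivity.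
        rewrite Rabs_R0. lra.
      + lia.
    - left. rewrite Rabs_R0. lra. }
  specialize (H Hc n). rewrite Hwn in H.
  pose proof (sol_nY m x). fold u in H0. pose proof (TBd m x n). fold u in H1.
  assert (IZR (m - 1 - n) * nrm n (u n) <= M * nrm m x).
  { apply (div_c _ _ n).
    pose proof (HN m n). pose proof (f_ge0 _ (nrmN m) x). pose proof (c_pos n). pose proof (c_pos m).
    unfold M.
    assert (K * (K * (nrm m x * c m)) <= K * K * N * nrm m x * c n).
    { replace (K * K * N * nrm m x * c n) with (K * K * nrm m x * (N * c n)) by ring.
      replace (K * (K * (nrm m x * c m))) with (K * K * nrm m x * c m) by ring.
      apply Rmult_le_compat_l. nra. lra. }
    nra. }
  replace (IZR (m - n)) with (IZR (m - 1 - n) + 1) by (rewrite <- plus_IZR; f_equal; lia).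
  lra.
Qed.

Variable L : nat.
Hypothesis HL : 4 * M <= INR L.

Lemma L_pos : (0 < L)%nat.
Proof. destruct L. simpl in HL. pose proof M_ge1. lra. lia. Qed.

Lemma SI j : forall m v, P m v = v -> forall k, (j * L <= k)%nat ->
  nrm (m + Z.of_nat k)%Z (evol A m k v) <= M * (1/2)^j * nrm m v.
Proof.
  induction j as [|j IH]; intros m v Hv k Hk.
  - rewrite <- Hv at 1. rewrite <- sol_stab. simpl. rewrite Rmult_1_r. apply TBd.
  - assert (Ek : k = (L + (k - L))%nat). { simpl in Hk. lia. }
    rewrite Ek, evol_comp, Nat2Z.inj_add, Z.add_assoc.
    set (v' := evol A m L v).
    assert (Hv' : P (m + Z.of_nat L)%Z v' = v') by (apply evol_img; auto).
    pose proof (IH _ v' Hv' (k - L)%nat ltac:(simpl in Hk; lia)).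
    pose proof (SE m v L). rewrite Hv in H0. fold v' in H0.
    pose proof M_ge1. pose proof (f_ge0 _ (nrmN (m + Z.of_nat L)%Z) v'). pose proof (f_ge0 _ (nrmN m) v).
    assert (nrm (m + Z.of_nat L)%Z v' <= / 2 * nrm m v).
    { assert (nrm (m + Z.of_nat L)%Z v' * (2 * M) <= M * nrm m v) by nra. nra. }
    simpl. assert (0 <= (1/2)^j) by (apply pow_le; lra).
    assert (0 <= M * (1/2)^j) by nra.
    eapply Rle_trans. apply H. replace (M * (1 / 2 * (1 / 2) ^ j) * nrm m v) with (M * (1/2)^j * (/2 * nrm m v)) by field.
    apply Rmult_le_compat_l; auto.
Qed.

Lemma UI j : forall m x n, (n + Z.of_nat (j * L) < m)%Z ->
  nrm n (G (e m x) n) <= M * (1/2)^j * nrm m x.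
Proof.
  induction j as [|j IH]; intros m x n Hnm.
  - simpl. rewrite Rmult_1_r. apply TBd.
  - set (m' := (m - Z.of_nat L)%Z). set (u := G (e m x)).
    assert (HLt : G (e m' (opp (u m'))) = Lt m' u).
    { apply LtSol. apply sol_Y. intros k Hk. unfold u. rewrite sol_T. unfold e.
      pose proof L_pos. destruct (Z.eq_dec k m); [lia|]. reflexivity. }
    assert (Hun : u n = G (e m' (opp (u m'))) n).
    { rewrite HLt. unfold Lt. destruct (Z_lt_dec n m'). reflexivity. simpl in Hnm. lia. }
    rewrite Hun. eapply Rle_trans. apply IH. simpl in Hnm. lia.
    rewrite f_opp by apply nrmN.
    pose proof (UE m x m' ltac:(pose proof L_pos; lia)). fold u in H.
    replace (m - m')%Z with (Z.of_nat L) in H by lia. rewrite <- INR_IZR_INZ in H.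
    pose proof M_ge1. pose proof (f_ge0 _ (nrmN m') (u m')). pose proof (f_ge0 _ (nrmN m) x).
    assert (nrm m' (u m') <= / 2 * nrm m x).
    { assert (nrm m' (u m') * (4 * M) <= 2 * M * nrm m x) by nra. nra. }
    simpl. assert (0 <= (1/2)^j) by (apply pow_le; lra).
    assert (0 <= M * (1/2)^j) by nra.
    replace (M * (1 / 2 * (1 / 2) ^ j) * nrm m x) with (M * (1/2)^j * (/2 * nrm m x)) by field.
    apply Rmult_le_compat_l; auto.
Qed.

Lemma bern a n : 0 <= a <= 1 -> 1 - INR n * a <= (1 - a)^n.
Proof.
  intros Ha. induction n as [|n IH].
  - simpl. lra.
  - rewrite S_INR. simpl. pose proof (pos_INR n).
    assert ((1 - a) * (1 - INR n * a) <= (1 - a) * (1 - a)^n) by (apply Rmult_le_compat_l; lra).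
    nra.
Qed.

Definition lam := 1 - / (2 * INR L).

Lemma lam_bounds : / 2 <= lam /\ lam < 1.
Proof.
  pose proof L_pos. assert (1 <= INR L) by (apply (le_INR 1); lia).
  unfold lam. split.
  - assert (/ (2 * INR L) <= / 2). { apply Rinv_le_contravar; lra. } lra.
  - assert (0 < / (2 * INR L)) by (apply Rinv_0_lt_compat; lra). lra.
Qed.

Lemma lamL : / 2 <= lam ^ L.
Proof.
  pose proof L_pos. assert (1 <= INR L) by (apply (le_INR 1); lia).
  unfold lam. eapply Rle_trans. 2: apply bern.
  - field_simplify; lra.
  - split. left; apply Rinv_0_lt_compat; lra.
    assert (/ (2 * INR L) <= / 2). { apply Rinv_le_contravar; lra. } lra.
Qed.

Lemma pow_anti x a b : 0 <= x <= 1 -> (a <= b)%nat -> x ^ b <= x ^ a.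
Proof.
  intros Hx Hab. replace b with (a + (b - a))%nat by lia. rewrite pow_add.
  assert (x ^ (b - a) <= 1). { rewrite <- (pow1 (b - a)). apply pow_incr; lra. }
  assert (0 <= x ^ a) by (apply pow_le; lra). nra.
Qed.

Lemma half_lam k j : (k <= (S j) * L)%nat -> (1/2)^j <= 2 * lam ^ k.
Proof.
  intros H. destruct lam_bounds.
  assert (lam ^ (S j * L) <= lam ^ k) by (apply pow_anti; auto; lra).
  rewrite Nat.mul_comm, pow_mult in H2.
  assert ((/2) ^ (S j) <= (lam ^ L) ^ S j) by (apply pow_incr; split; [lra| apply lamL]).
  assert (E : (/2) ^ (S j) = /2 * (/2)^j) by reflexivity. rewrite E in H3.
  replace (1/2) with (/2) by field. lra.
Qed.

Lemma dich : exp_dichotomy X A nrm.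
Proof.
  destruct lam_bounds as [Hl1 Hl2]. pose proof M_ge1 as HM. pose proof L_pos as HLp.
  exists P. split; [exact P_lin|]. split; [exact P_idem|]. split; [exact P_inv|].
  split. { intros m. split. apply P_ker_inj. apply P_ker_surj. }
  exists (2 * M * M), lam, (/ lam).
  split. nra. split. lra. split. lra. split.
  { rewrite <- Rinv_1. apply Rinv_lt_contravar; lra. }
  split.
  - intros n m x Hmn. unfold Acal. set (k := Z.to_nat (n - m)).
    assert (En : n = (m + Z.of_nat k)%Z) by (unfold k; lia).
    assert (Ep : powerRZ lam (n - m) = lam ^ k).
    { rewrite pow_powerRZ. f_equal. unfold k. lia. }
    rewrite Ep. rewrite En at 1.
    pose proof (SI (k / L) m (P m x) (P_idem m x) k) as H.
    assert (Hd : (k / L * L <= k)%nat) by (rewrite Nat.mul_comm; apply Nat.mul_div_le; lia).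
    specialize (H Hd).
    assert (Hk : (k <= S (k / L) * L)%nat).
    { pose proof (Nat.div_mod k L ltac:(lia)). pose proof (Nat.mod_upper_bound k L ltac:(lia)). simpl. lia. }
    pose proof (half_lam _ _ Hk).
    pose proof (TBd m x m). change (G (e m x) m) with (P m x) in H1.
    pose proof (f_ge0 _ (nrmN m) x). pose proof (f_ge0 _ (nrmN m) (P m x)).
    assert (0 <= (1/2)^(k/L)) by (apply pow_le; lra).
    assert (0 <= lam ^ k) by (apply pow_le; lra).
    eapply Rle_trans. apply H.
    assert (M * (1/2)^(k/L) * nrm m (P m x) <= M * (2 * lam ^ k) * (M * nrm m x)).
    { apply Rmult_le_compat; try nra. }
    nra.
  - intros n m x y Hnm Hy Hacal. unfold Acal in Hacal.
    pose proof (f_ge0 _ (nrmN m) x). pose proof (TBd m x m). change (G (e m x) m) with (P m x) in H0.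
    destruct (Z.eq_dec n m) as [->|Hne].
    + replace (m - m)%Z with 0%Z in Hacal by lia. simpl in Hacal. rewrite Hacal.
      replace (m - m)%Z with 0%Z by lia. rewrite powerRZ_O.
      eapply Rle_trans. apply f_sub, nrmN. assert (1 + M <= 2 * M * M) by nra. assert ((1 + M) * nrm m x <= 2 * M * M * nrm m x) by (apply Rmult_le_compat_r; lra). nra.
    + set (k := Z.to_nat (m - n)). fold k in Hacal. set (u := G (e m x)).
      assert (Hkp : (1 <= k)%nat) by (unfold k; lia).
      assert (HLt : G (e n (opp (u n))) = Lt n u).
      { apply LtSol. apply sol_Y. intros i Hi. unfold u. rewrite sol_T. unfold e.
        destruct (Z.eq_dec i m); [lia|]. reflexivity. }
      assert (Hy' : y = opp (u n)).
      { apply (evol_ker_inj n k); auto.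
        - unfold P. rewrite HLt. unfold Lt. destruct (Z_lt_dec n n); [lia|]. reflexivity.
        - rewrite Hacal, (L_opp _ (evol_lin n k)).
          assert (Hk1 : (n + Z.of_nat (k-1))%Z = (m-1)%Z) by (unfold k; lia).
          assert (Hk2 : forall i, (i < k-1)%nat -> (n + Z.of_nat i + 1)%Z <> m) by (unfold k; lia).
          replace k with (S (k-1)) by lia. cbn [evol].
          rewrite <- (sol_evol u n (k-1)).
          + rewrite Hk1. unfold u. rewrite sol_m. rewrite opp_sub. reflexivity.
          + intros i Hi. unfold u. rewrite sol_rec by (apply Hk2; lia).
            replace (n + Z.of_nat i + 1 - 1)%Z with (n + Z.of_nat i)%Z by lia. reflexivity. }
      rewrite Hy', f_opp by apply nrmN.
      set (j := ((k - 1) / L)%nat).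
      assert (Hj1 : (j * L <= k - 1)%nat) by (unfold j; rewrite Nat.mul_comm; apply Nat.mul_div_le; lia).
      assert (Hk : (k <= S j * L)%nat).
      { pose proof (Nat.div_mod (k-1) L ltac:(lia)). pose proof (Nat.mod_upper_bound (k-1) L ltac:(lia)).
        unfold j. simpl. lia. }
      pose proof (UI j m x n ltac:(rewrite Nat2Z.inj_mul; unfold k in *; lia)) as HU.
      fold u in HU. pose proof (half_lam _ _ Hk).
      assert (Ep : powerRZ (/ lam) (n - m) = lam ^ k).
      { rewrite powerRZ_inv'. replace (n - m)%Z with (- Z.of_nat k)%Z by (unfold k; lia).
        rewrite powerRZ_neg', <- pow_powerRZ, Rinv_inv. reflexivity. }
      rewrite Ep.
      assert (0 <= (1/2)^j) by (apply pow_le; lra).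
      assert (0 <= lam ^ k) by (apply pow_le; lra).
      eapply Rle_trans. apply HU.
      assert (M * (1/2)^j <= M * (2 * lam ^ k)) by (apply Rmult_le_compat_l; lra).
      assert (M * (2 * lam ^ k) <= 2 * M * M * lam ^ k).
      { assert (0 <= 2*M*lam^k*(M-1)) by (repeat apply Rmult_le_pos; lra). nra. }
      apply Rmult_le_compat_r; lra.
Qed.

End Dich.

Lemma nB_zero : nB (fun _ => 0) = 0.
Proof.
  pose proof (nB_scal 0 (chi 0) (B_chi 0)). rewrite Rabs_R0, Rmult_0_l in H.
  replace (fun _ : Z => 0) with (fun n => 0 * chi 0 n). exact H.
  apply functional_extensionality. intros; ring.
Qed.
Lemma nY_zero : nY (fun _ => zero) = 0.
Proof.
  unfold nY, YB_norm. rewrite <- nB_zero. f_equal. apply functional_extensionality. intros n.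
  apply f_zero, nrmN.
Qed.
Lemma B_sub s t : B s -> B t -> B (fun n => s n - t n).
Proof.
  intros Hs Ht. replace (fun n => s n - t n) with (fun n => s n + (-1) * t n).
  apply B_add; auto. apply B_scal; auto. apply functional_extensionality; intros; ring.
Qed.
Lemma nB_sub_comm s t : B s -> B t -> nB (fun n => s n - t n) = nB (fun n => t n - s n).
Proof.
  intros Hs Ht. pose proof (nB_scal (-1) _ (B_sub t s Ht Hs)).
  replace (Rabs (-1)) with 1 in H by (rewrite Rabs_left by lra; lra). rewrite Rmult_1_l in H.
  rewrite <- H. f_equal.
  apply functional_extensionality; intros; ring.
Qed.
Lemma nB_sub_tri s t u : B s -> B t -> B u ->
  nB (fun n => s n - u n) <= nB (fun n => s n - t n) + nB (fun n => t n - u n).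
Proof.
  intros Hs Ht Hu. replace (fun n => s n - u n) with (fun n => (s n - t n) + (t n - u n)).
  apply nB_tri; apply B_sub; auto. apply functional_extensionality; intros; ring.
Qed.
Lemma B_compl (u : nat -> seqR) : (forall k, B (u k)) ->
    (forall eps, 0 < eps -> exists N : nat, forall i j : nat,
        (N <= i)%nat -> (N <= j)%nat -> nB (fun n => u i n - u j n) < eps) ->
    exists l : seqR, B l /\ forall eps, 0 < eps -> exists N : nat, forall i : nat,
        (N <= i)%nat -> nB (fun n => u i n - l n) < eps.
Proof. apply HB. Qed.

Fixpoint Ssum (Dd : nat -> seqR) (j : nat) : seqR :=
  match j with O => fun _ => 0 | S j => fun n => Ssum Dd j n + Dd j n end.

Lemma nY_sub_self x : nY (fun n => sub (x n) (x n)) = 0.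
Proof. rewrite <- nY_zero. f_equal. apply functional_extensionality; intros; apply sub_self. Qed.

Lemma Ycompl (y : nat -> Z -> X) (d t : nat -> R) :
  (forall i, Y (y i)) ->
  (forall i, nY (fun n => sub (y (S i) n) (y i n)) <= d i) ->
  (forall i, d i + t (S i) <= t i) -> (forall i, 0 <= t i) ->
  (forall eps, 0 < eps -> exists i, t i < eps) ->
  exists l, Y l /\ forall k, nY (fun n => sub (l n) (y k n)) <= t k.
Proof.
  intros Hy Hd Ht Ht0 Htl.
  assert (Hdge : forall i, 0 <= d i).
  { intros i. eapply Rle_trans. apply nY_ge0. apply Y_sub; auto. apply Hd. }
  assert (tdec : forall k j, t (k + j)%nat <= t k).
  { intros k j. induction j. rewrite Nat.add_0_r; lra. rewrite Nat.add_succ_r.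
    pose proof (Ht (k + j)%nat). pose proof (Hdge (k+j)%nat). lra. }
  assert (tdec' : forall k i, (k <= i)%nat -> t i <= t k).
  { intros k i Hki. replace i with (k + (i - k))%nat by lia. apply tdec. }
  assert (tele : forall k j, nY (fun n => sub (y (k+j)%nat n) (y k n)) <= t k - t (k+j)%nat).
  { intros k j. induction j.
    - rewrite Nat.add_0_r, nY_sub_self. lra.
    - rewrite Nat.add_succ_r. eapply Rle_trans. apply (nY_tri _ (y (k+j)%nat)); auto.
      pose proof (Hd (k+j)%nat). pose proof (Ht (k+j)%nat). lra. }
  assert (cauchy : forall k i j, (k <= i)%nat -> (k <= j)%nat -> nY (fun n => sub (y i n) (y j n)) <= t k).
  { intros k i j Hi Hj. destruct (Nat.le_ge_cases j i).
    - replace i with (j + (i - j))%nat by lia. eapply Rle_trans. apply tele.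
      pose proof (Ht0 (j + (i - j))%nat). pose proof (tdec' k j Hj). lra.
    - rewrite nY_sub_comm. replace j with (i + (j - i))%nat by lia. eapply Rle_trans. apply tele.
      pose proof (Ht0 (i + (j - i))%nat). pose proof (tdec' k i Hi). lra. }
  assert (Hlim : forall n, exists ln : X, forall eps, 0 < eps -> exists N : nat, forall i : nat,
        (N <= i)%nat -> norm (sub (y i n) ln) < eps).
  { intros n. destruct (proj2 (Hn n)) as [a [b [Ha [Hb Hab]]]].
    apply HX. intros eps Heps. destruct (Htl (eps * a * c n)) as [i0 Hi0].
    { pose proof (c_pos n). apply Rmult_lt_0_compat; auto. nra. }
    exists i0. intros i j Hi Hj. pose proof (cauchy i0 i j Hi Hj).
    pose proof (Y_pt _ n (proj1 (Y_sub _ _ (Hy i) (Hy j)))). simpl in H0.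
    pose proof (Hab (sub (y i n) (y j n))). pose proof (c_pos n).
    assert (a * norm (sub (y i n) (y j n)) * c n < eps * a * c n) by nra.
    assert (HH : norm (sub (y i n) (y j n)) * (a * c n) < eps * (a * c n)) by lra.
    apply Rmult_lt_reg_r in HH; auto. nra. }
  set (l := fun n => proj1_sig (constructive_indefinite_description _ (Hlim n))).
  assert (Hl : forall n eps, 0 < eps -> exists N : nat, forall i : nat,
        (N <= i)%nat -> norm (sub (y i n) (l n)) < eps).
  { intros n. unfold l. destruct (constructive_indefinite_description _ (Hlim n)). simpl. auto. }
  clearbody l.
  set (Dd := fun i n => nrm n (sub (y (S i) n) (y i n))).
  assert (BD : forall i, B (Dd i)). { intros i. apply (proj1 (Y_sub _ _ (Hy (S i)) (Hy i))). }
  set (Sm := Ssum Dd).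
  assert (BS : forall j, B (Sm j)). { induction j. apply B_zero. apply B_add; auto. }
  assert (SS : forall k j, nB (fun n => Sm (k+j)%nat n - Sm k n) <= t k - t (k+j)%nat).
  { intros k j. induction j.
    - rewrite Nat.add_0_r. replace (fun n => Sm k n - Sm k n) with (fun _ : Z => 0).
      rewrite nB_zero. lra. apply functional_extensionality; intros; ring.
    - rewrite Nat.add_succ_r. replace (fun n => Sm (S (k + j)) n - Sm k n) with
        (fun n => (Sm (k+j)%nat n - Sm k n) + Dd (k+j)%nat n).
      2:{ apply functional_extensionality; intros n. unfold Sm. simpl. ring. }
      eapply Rle_trans. apply nB_tri. apply B_sub; auto. auto.
      pose proof (Hd (k+j)%nat). pose proof (Ht (k+j)%nat). unfold nY, YB_norm in H. unfold Dd. lra. }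
  assert (Spt : forall k j n, nrm n (sub (y (k+j)%nat n) (y k n)) <= Sm (k+j)%nat n - Sm k n).
  { intros k j n. induction j.
    - rewrite Nat.add_0_r, sub_self, f_zero by apply nrmN. lra.
    - rewrite Nat.add_succ_r. eapply Rle_trans. apply (f_tri _ (nrmN n) _ (y (k+j)%nat n)).
      unfold Sm. simpl. fold Sm. unfold Dd at 1. lra. }
  destruct (B_compl Sm BS) as [Sinf [BSinf HSinf]].
  { intros eps Heps. destruct (Htl eps Heps) as [N HN]. exists N. intros i j Hi Hj.
    destruct (Nat.le_ge_cases j i).
    - replace i with (j + (i - j))%nat by lia. eapply Rle_lt_trans. apply SS.
      pose proof (Ht0 (j + (i - j))%nat). pose proof (tdec' N j Hj). lra.
    - rewrite nB_sub_comm by auto. replace j with (i + (j - i))%nat by lia. eapply Rle_lt_trans. apply SS.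
      pose proof (Ht0 (i + (j - i))%nat). pose proof (tdec' N i Hi). lra. }
  assert (BR : forall k, B (fun n => Sinf n - Sm k n)) by (intros; apply B_sub; auto).
  assert (Rbound : forall k, nB (fun n => Sinf n - Sm k n) <= t k).
  { intros k. apply Rle_plus_epsilon. intros eps Heps. destruct (HSinf eps Heps) as [N HN].
    eapply Rle_trans. apply (nB_sub_tri _ (Sm (k + N)%nat)); auto.
    rewrite nB_sub_comm by auto. pose proof (HN (k + N)%nat ltac:(lia)). pose proof (SS k N).
    pose proof (Ht0 (k + N)%nat). lra. }
  assert (Rpt : forall k n, nrm n (sub (l n) (y k n)) <= Sinf n - Sm k n).
  { intros k n. apply Rle_plus_epsilon. intros eps Heps.
    destruct (HSinf (eps / 2 * c n)) as [N1 HN1]. { pose proof (c_pos n). apply Rmult_lt_0_compat; lra. }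
    destruct (proj2 (Hn n)) as [a [b [Ha [Hb Hab]]]].
    destruct (Hl n (eps / 2 / b)) as [N2 HN2]. { apply Rdiv_lt_0_compat; lra. }
    set (i := (k + (N1 + N2))%nat).
    pose proof (HN1 i ltac:(unfold i; lia)) as Q1. pose proof (HN2 i ltac:(unfold i; lia)) as Q2.
    pose proof (pt_bound _ n (B_sub _ _ (BS i) BSinf)) as H1. simpl in H1.
    pose proof (c_pos n) as Q3.
    assert (Q4 : Rabs (Sm i n - Sinf n) < eps / 2).
    { apply (Rmult_lt_reg_r (c n)); auto. lra. }
    pose proof (Hab (sub (y i n) (l n))) as Q5.
    assert (Q6 : nrm n (sub (y i n) (l n)) < eps / 2).
    { assert (Q7 : b * norm (sub (y i n) (l n)) < b * (eps / 2 / b)) by (apply Rmult_lt_compat_l; auto).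
      replace (b * (eps / 2 / b)) with (eps / 2) in Q7 by (field; lra). lra. }
    pose proof (Spt k (N1 + N2)%nat n) as Q8. fold i in Q8.
    eapply Rle_trans. apply (f_tri _ (nrmN n) _ (y i n)). rewrite f_sub_comm by apply nrmN.
    apply Rabs_def2 in Q4. lra. }
  assert (Hk : forall k, Y (fun n => sub (l n) (y k n)) /\ nY (fun n => sub (l n) (y k n)) <= t k).
  { intros k. destruct (B_solid (fun n => nrm n (sub (l n) (y k n))) _ (BR k)) as [G1 G2].
    { intros n. pose proof (Rpt k n). pose proof (f_ge0 _ (nrmN n) (sub (l n) (y k n))).
      rewrite !Rabs_pos_eq; lra. }
    split. exact G1. eapply Rle_trans. apply G2. apply Rbound. }
  exists l. split.
  - replace l with (fun n => add (sub (l n) (y 0%nat n)) (y 0%nat n)).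
    apply Y_add. apply Hk. apply Hy. apply functional_extensionality; intros; apply sub_add_cancel.
  - intros k. apply Hk.
Qed.


Lemma G_zero : G (fun _ => zero) = fun _ => zero.
Proof.
  apply G_uniq. split; [apply Y_zero|]. unfold Y. replace (TB X A (fun _ : Z => zero)) with (fun _ : Z => @zero X).
  apply Y_zero. apply functional_extensionality; intros n. unfold TB. rewrite A_zero, sub_self. reflexivity.
  apply Y_zero. intros n. unfold T, TB. rewrite A_zero, sub_self. reflexivity.
Qed.

Lemma G_sub y1 y2 : Y y1 -> Y y2 ->
  G (fun k => sub (y1 k) (y2 k)) = fun k => sub (G y1 k) (G y2 k).
Proof.
  intros H1 H2. destruct (G_spec _ H1) as [[D1 D1'] T1]. destruct (G_spec _ H2) as [[D2 D2'] T2].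
  apply G_uniq. split. apply Y_sub; auto.
  unfold Y. replace (TB X A (fun k => sub (G y1 k) (G y2 k))) with (fun k => sub (y1 k) (y2 k)).
  apply Y_sub; auto. apply functional_extensionality; intros n. symmetry. fold T.
  rewrite T_sub, T1, T2. reflexivity.
  apply Y_sub; auto. intros n. rewrite T_sub, T1, T2. reflexivity.
Qed.

Lemma nY_scal r x : Y x -> nY (fun n => scal r (x n)) = Rabs r * nY x.
Proof.
  intros Hx. unfold nY, YB_norm. transitivity (nB (fun n => Rabs r * nrm n (x n))).
  f_equal. apply functional_extensionality; intros n. apply f_scal, nrmN.
  rewrite nB_scal by exact Hx. rewrite Rabs_Rabsolu. reflexivity.
Qed.

Lemma coordT n : exists Cn, 0 <= Cn /\ forall w, Y w -> nrm n (T w n) <= Cn * nY w.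
Proof.
  destruct (proj2 (Hn n)) as [a1 [b1 [Ha1 [Hb1 Hab1]]]].
  destruct (proj2 (Hn (n-1)%Z)) as [a0 [b0 [Ha0 [Hb0 Hab0]]]].
  destruct (proj2 (HA (n-1)%Z)) as [Ca HCa].
  set (Ca' := Rmax Ca 0).
  pose proof (c_pos n). pose proof (c_pos (n-1)%Z).
  assert (HCa' : 0 <= Ca') by apply Rmax_r.
  exists (/ c n + b1 * Ca' / (a0 * c (n-1)%Z)). split.
  { assert (0 < / c n) by (apply Rinv_0_lt_compat; lra).
    assert (0 <= b1 * Ca' / (a0 * c (n-1)%Z)).
    { apply Rmult_le_pos. nra. left; apply Rinv_0_lt_compat; nra. } lra. }
  intros w Hw. unfold T, TB. eapply Rle_trans. apply f_sub, nrmN.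
  pose proof (Y_pt w n Hw). pose proof (Y_pt w (n-1)%Z Hw).
  assert (E1 : nrm n (w n) <= / c n * nY w).
  { apply (Rmult_le_reg_r (c n)); auto. rewrite Rmult_assoc, (Rmult_comm (nY w)), <- Rmult_assoc, Rinv_l by lra. lra. }
  set (w' := w (n-1)%Z) in *.
  assert (E2 : nrm n (A (n-1)%Z w') <= b1 * Ca' / (a0 * c (n-1)%Z) * nY w).
  { pose proof (Hab1 (A (n-1)%Z w')) as Q1. pose proof (HCa w') as Q2. pose proof (Hab0 w') as Q3.
    pose proof (f_ge0 _ (norm_ax X) w') as Q4. pose proof (f_ge0 _ (norm_ax X) (A (n-1)%Z w')) as Q5.
    assert (Q6 : norm (A (n-1)%Z w') <= Ca' * norm w').
    { eapply Rle_trans. apply Q2. apply Rmult_le_compat_r; auto. apply Rmax_l. }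
    assert (Q7 : norm w' <= nY w / (a0 * c (n-1)%Z)).
    { apply (Rmult_le_reg_r (a0 * c (n-1)%Z)). nra. unfold Rdiv. rewrite Rmult_assoc, Rinv_l by nra. nra. }
    assert (Q8 : nrm n (A (n-1)%Z w') <= b1 * (Ca' * norm w')) by nra.
    assert (Q9 : b1 * (Ca' * norm w') <= b1 * (Ca' * (nY w / (a0 * c (n-1)%Z)))).
    { apply Rmult_le_compat_l. lra. apply Rmult_le_compat_l; auto. }
    replace (b1 * Ca' / (a0 * c (n - 1)%Z) * nY w) with (b1 * (Ca' * (nY w / (a0 * c (n - 1)%Z)))) by (field; nra).
    lra. }
  lra.
Qed.

Lemma CG (s : nat -> Z -> X) y z : (forall p, Y (s p)) -> Y y -> Y z ->
  (forall eps, 0 < eps -> exists p0, forall p, (p0 <= p)%nat -> nY (fun n => sub (s p n) (y n)) < eps) ->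
  (forall eps, 0 < eps -> exists p0, forall p, (p0 <= p)%nat -> nY (fun n => sub (z n) (G (s p) n)) < eps) ->
  G y = z.
Proof.
  intros Hs Hy Hz Hc1 Hc2.
  assert (HTz : forall n, T z n = y n).
  { intros n. destruct (coordT n) as [Cn [HC0 HC]]. apply sub_eq_zero. apply (f_eq0 _ (nrmN n)).
    apply Rle_antisym; [| apply f_ge0, nrmN]. apply Rle_plus_epsilon. intros eps Heps.
    pose proof (c_pos n) as Hcn.
    destruct (Hc1 (eps * c n / 2)) as [p0 Hp0]. { apply Rmult_lt_0_compat; nra. }
    destruct (Hc2 (eps / (2 * (Cn + 1)))) as [p1 Hp1]. { apply Rdiv_lt_0_compat; lra. }
    set (p := (p0 + p1)%nat). specialize (Hp0 p ltac:(unfold p; lia)). specialize (Hp1 p ltac:(unfold p; lia)).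
    destruct (G_spec _ (Hs p)) as [[Dg1 Dg2] Tg].
    set (g := G (s p)) in *.
    assert (Yw : Y (fun k => sub (z k) (g k))) by (apply Y_sub; auto).
    assert (Tw : T (fun k => sub (z k) (g k)) n = sub (T z n) (s p n)) by (rewrite T_sub, Tg; reflexivity).
    pose proof (HC _ Yw) as Q1. rewrite Tw in Q1.
    pose proof (Y_pt _ n (proj1 (Y_sub _ _ (Hs p) Hy))) as Q2. simpl in Q2.
    assert (Q3 : nrm n (sub (s p n) (y n)) < eps / 2).
    { apply (Rmult_lt_reg_r (c n)); auto. lra. }
    rewrite <- (sub_tele (T z n) (s p n) (y n)).
    eapply Rle_trans. apply f_add, nrmN.
    assert (Q4 : Cn * nY (fun k => sub (z k) (g k)) <= Cn * (eps / (2 * (Cn + 1)))).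
    { apply Rmult_le_compat_l; lra. }
    assert (Q5 : Cn * (eps / (2 * (Cn + 1))) <= eps / 2).
    { unfold Rdiv. rewrite Rinv_mult.
      assert (Cn * / (Cn + 1) <= 1).
      { apply (Rmult_le_reg_r (Cn + 1)). lra. rewrite Rmult_assoc, Rinv_l by lra. lra. }
      assert (0 < eps * / 2) by lra. nra. }
    lra. }
  apply G_uniq. split; auto. unfold Y. fold (T z). replace (T z) with y. auto.
  apply functional_extensionality; intros n; symmetry; apply HTz. auto. auto.
Qed.

Lemma nat_gt x : exists k : nat, x < INR k.
Proof.
  destruct (archimed (Rabs x)) as [H _]. pose proof (Rabs_pos x). pose proof (Rle_abs x).
  assert (0 <= up (Rabs x))%Z by (apply le_IZR; lra).
  exists (Z.to_nat (up (Rabs x))). rewrite INR_IZR_INZ, Z2Nat.id by auto. lra.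
Qed.

Lemma half_small a eps : 0 < eps -> exists N : nat, forall p, (N <= p)%nat -> a * (1/2)^p < eps.
Proof.
  intros He. destruct (pow_lt_1_zero (1/2) ltac:(rewrite Rabs_pos_eq; lra) (eps / (Rabs a + 1))) as [N HN].
  { apply Rdiv_lt_0_compat; auto. pose proof (Rabs_pos a). lra. }
  exists N. intros p Hp. specialize (HN p Hp). rewrite Rabs_pos_eq in HN by (apply pow_le; lra).
  pose proof (Rabs_pos a). pose proof (Rle_abs a). assert (0 <= (1/2)^p) by (apply pow_le; lra).
  assert (a * (1/2)^p <= Rabs a * (1/2)^p) by (apply Rmult_le_compat_r; auto).
  assert ((Rabs a + 1) * (1/2)^p < eps).
  { apply (Rmult_lt_compat_l (Rabs a + 1)) in HN. replace ((Rabs a + 1) * (eps / (Rabs a + 1))) with eps in HN by (field; lra). auto. lra. }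
  nra.
Qed.

Fixpoint iterB (F : nat -> (Z -> X) -> R -> (Z -> X) * R) (k : nat) : (Z -> X) * R :=
  match k with
  | O => (fun _ => zero, 1)
  | S k => let p := iterB F k in let q := F k (fst p) (snd p / 2) in (fst q, Rmin (snd q / 2) (snd p / 4))
  end.

Lemma baire : exists (k : nat) y0 r, Y y0 /\ 0 < r /\ forall y, Y y -> nY (fun n => sub (y n) (y0 n)) < r ->
  forall eps, 0 < eps -> exists y', Y y' /\ nY (fun n => sub (y n) (y' n)) < eps /\ nY (G y') <= INR k.
Proof.
  apply NNPP. intros Hno.
  assert (Hstep : forall k y0 r, exists p : (Z -> X) * R, Y y0 -> 0 < r ->
    Y (fst p) /\ nY (fun n => sub (fst p n) (y0 n)) < r /\ 0 < snd p /\
    forall y', Y y' -> nY (fun n => sub (fst p n) (y' n)) < snd p -> INR k < nY (G y')).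
  { intros k y0 r. destruct (classic (Y y0 /\ 0 < r)) as [[Hy0 Hr]|Hc]; [|exists (y0, r); tauto].
    apply NNPP; intro H1. apply Hno. exists k, y0, r. split;[auto|split;[auto|]].
    intros y Hy Hyr eps Heps. apply NNPP; intro H2. apply H1. exists (y, eps). intros _ _. simpl.
    split; auto. split; auto. split; auto. intros y' Hy' Hyy'. apply Rnot_le_lt. intro Hle.
    apply H2. exists y'. auto. }
  set (F := fun k y0 r => proj1_sig (constructive_indefinite_description _ (Hstep k y0 r))).
  assert (HF : forall k y0 r, Y y0 -> 0 < r ->
    Y (fst (F k y0 r)) /\ nY (fun n => sub (fst (F k y0 r) n) (y0 n)) < r /\ 0 < snd (F k y0 r) /\
    forall y', Y y' -> nY (fun n => sub (fst (F k y0 r) n) (y' n)) < snd (F k y0 r) -> INR k < nY (G y')).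
  { intros k y0 r. unfold F. destruct (constructive_indefinite_description _ (Hstep k y0 r)). simpl. auto. }
  clearbody F.
  assert (Inv : forall k, Y (fst (iterB F k)) /\ 0 < snd (iterB F k) /\ snd (iterB F k) <= (1/4)^k).
  { induction k as [|k [IH1 [IH2 IH3]]].
    - cbn [iterB fst snd]. split. apply Y_zero. simpl. lra.
    - assert (E : (1/4)^(S k) = 1/4 * (1/4)^k) by reflexivity. rewrite E. cbn [iterB fst snd]. destruct (HF k (fst (iterB F k)) (snd (iterB F k) / 2) IH1 ltac:(lra)) as [Q1 [Q2 [Q3 Q4]]].
      split; auto. split. apply Rmin_pos; lra.
      eapply Rle_trans. apply Rmin_r. lra. }
  assert (Step : forall k, nY (fun n => sub (fst (iterB F (S k)) n) (fst (iterB F k) n)) < snd (iterB F k) / 2 /\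
     snd (iterB F (S k)) <= snd (iterB F k) / 4 /\
     forall y', Y y' -> nY (fun n => sub (fst (iterB F (S k)) n) (y' n)) <= snd (iterB F (S k)) -> INR k < nY (G y')).
  { intros k. destruct (Inv k) as [I1 [I2 I3]].
    destruct (HF k (fst (iterB F k)) (snd (iterB F k) / 2) I1 ltac:(lra)) as [Q1 [Q2 [Q3 Q4]]].
    cbn [iterB fst snd]. split. auto. split. apply Rmin_r. intros y' Hy' H. apply Q4; auto.
    eapply Rle_lt_trans. apply H. eapply Rle_lt_trans. apply Rmin_l. lra. }
  destruct (Ycompl (fun k => fst (iterB F k)) (fun k => snd (iterB F k) / 2) (fun k => 2/3 * snd (iterB F k))) as [l [Hl Hlk]].
  - intros i. apply Inv.
  - intros i. left. apply Step.
  - intros i. pose proof (proj1 (proj2 (Step i))). lra.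
  - intros i. pose proof (proj1 (proj2 (Inv i))). lra.
  - intros eps Heps. destruct (pow_lt_1_zero (1/4) ltac:(rewrite Rabs_pos_eq; lra) eps Heps) as [N HN].
    exists N. specialize (HN N (le_n N)). rewrite Rabs_pos_eq in HN by (apply pow_le; lra).
    pose proof (Inv N). lra.
  - destruct (nat_gt (nY (G l))) as [k Hk].
    assert (INR k < nY (G l)).
    { apply (proj2 (proj2 (Step k))). auto. rewrite nY_sub_comm. eapply Rle_trans. apply (Hlk (S k)).
      pose proof (Inv (S k)). lra. }
    lra.
Qed.

Lemma nY0_G y : Y y -> nY y = 0 -> nY (G y) = 0.
Proof.
  intros Hy H. replace y with (fun _ : Z => @zero X). rewrite G_zero. apply nY_zero.
  apply functional_extensionality; intros n. symmetry. apply (nY_eq0 y Hy H n).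
Qed.

Lemma approx : exists C, 0 <= C /\ forall y, Y y -> forall eps, 0 < eps ->
  exists y', Y y' /\ nY (fun n => sub (y n) (y' n)) < eps /\ nY (G y') <= C * nY y.
Proof.
  destruct baire as [k [y0 [r [Hy0 [Hr Hb]]]]].
  destruct (G_spec _ Hy0) as [[YG0 _] _].
  pose proof (nY_ge0 _ YG0). pose proof (pos_INR k).
  exists (2 * (INR k + nY (G y0)) / r). split. { apply Rmult_le_pos. lra. left; apply Rinv_0_lt_compat; lra. }
  intros y Hy eps Heps. pose proof (nY_ge0 _ Hy) as Hy0'.
  destruct (Req_dec (nY y) 0) as [Z0|NZ].
  - exists y. split; auto. rewrite nY_sub_self. split; auto. rewrite nY0_G, Z0 by auto. lra.
  - set (a := nY y) in *. assert (Ha : 0 < a) by lra.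
    set (t := r / (2 * a)). assert (Ht : 0 < t) by (unfold t; apply Rdiv_lt_0_compat; lra).
    set (yt := fun n => add (y0 n) (scal t (y n))).
    assert (Yyt : Y yt) by (apply Y_add; auto; apply Y_scal; auto).
    assert (E1 : nY (fun n => sub (yt n) (y0 n)) < r).
    { unfold yt. replace (fun n => sub (add (y0 n) (scal t (y n))) (y0 n)) with (fun n => scal t (y n)).
      rewrite nY_scal, Rabs_pos_eq by (auto; lra). fold a. unfold t. field_simplify; lra.
      apply functional_extensionality; intros n. symmetry. apply sub_add_l. }
    destruct (Hb yt Yyt E1 (t * eps) ltac:(nra)) as [y1 [Hy1 [Q1 Q2]]].
    set (y' := fun n => scal (/t) (sub (y1 n) (y0 n))).
    assert (Yy' : Y y') by (apply Y_scal; apply Y_sub; auto).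
    exists y'. split; auto. split.
    + replace (fun n => sub (y n) (y' n)) with (fun n => scal (/t) (sub (yt n) (y1 n))).
      rewrite nY_scal by (apply Y_sub; auto). rewrite Rabs_pos_eq by (left; apply Rinv_0_lt_compat; auto).
      apply (Rmult_lt_reg_l t); auto. rewrite <- Rmult_assoc, Rinv_r, Rmult_1_l by lra. lra.
      apply functional_extensionality; intros n. unfold y', yt. symmetry. apply scal_inv_id. lra.
    + unfold y'. rewrite G_scal by (apply Y_sub; auto). rewrite G_sub by auto.
      destruct (G_spec _ Hy1) as [[YG1 _] _].
      rewrite nY_scal by (apply Y_sub; auto). rewrite Rabs_pos_eq by (left; apply Rinv_0_lt_compat; auto).
      pose proof (proj2 (Y_sub _ _ YG1 YG0)).
      assert (/ t * nY (fun k0 => sub (G y1 k0) (G y0 k0)) <= / t * (INR k + nY (G y0))).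
      { apply Rmult_le_compat_l. left; apply Rinv_0_lt_compat; auto. lra. }
      replace (2 * (INR k + nY (G y0)) / r * a) with (/ t * (INR k + nY (G y0))). lra.
      unfold t. field. split; lra.
Qed.

Fixpoint iterR (f : nat -> (Z -> X) -> (Z -> X)) (y : Z -> X) (i : nat) : Z -> X :=
  match i with O => y | S i => f i (iterR f y i) end.
Fixpoint psum (g : nat -> Z -> X) (p : nat) : Z -> X :=
  match p with O => fun _ => zero | S p => fun n => add (psum g p n) (g p n) end.

Lemma bdd_inv : exists K, 1 <= K /\ forall x, D x -> nY x <= K * nY (T x).
Proof.
  destruct approx as [C [HC Happ]].
  assert (Main : forall y, Y y -> nY (G y) <= 2 * C * nY y).
  { intros y Hy. pose proof (nY_ge0 _ Hy) as Hy0.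
    destruct (Req_dec (nY y) 0) as [Z0|NZ].
    { rewrite nY0_G, Z0 by auto. lra. }
    set (a := nY y) in *. assert (Ha : 0 < a) by lra.
    assert (Hap : forall v eps, exists y', Y v -> 0 < eps ->
      Y y' /\ nY (fun n => sub (v n) (y' n)) < eps /\ nY (G y') <= C * nY v).
    { intros v eps. destruct (classic (Y v /\ 0 < eps)) as [[H1 H2]|H].
      - destruct (Happ v H1 eps H2) as [y' Hy']. exists y'. auto.
      - exists v. tauto. }
    set (ap := fun v eps => proj1_sig (constructive_indefinite_description _ (Hap v eps))).
    assert (Hap' : forall v eps, Y v -> 0 < eps ->
      Y (ap v eps) /\ nY (fun n => sub (v n) (ap v eps n)) < eps /\ nY (G (ap v eps)) <= C * nY v).
    { intros v eps. unfold ap. destruct (constructive_indefinite_description _ (Hap v eps)). simpl. auto. }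
    clearbody ap.
    set (f := fun i v => fun n => sub (v n) (ap v (a * (1/2)^(S i)) n)).
    set (r := iterR f y).
    set (aa := fun i => ap (r i) (a * (1/2)^(S i))).
    assert (Inv : forall i, Y (r i) /\ nY (r i) <= a * (1/2)^i).
    { induction i as [|i [I1 I2]].
      - change (r 0%nat) with y. split; auto. rewrite pow_O. unfold a. lra.
      - assert (Hpos : 0 < a * (1/2)^(S i)) by (apply Rmult_lt_0_compat; auto; apply pow_lt; lra).
        destruct (Hap' (r i) _ I1 Hpos) as [Q1 [Q2 Q3]]. change (r (S i)) with (f i (r i)).
        unfold f. split. apply Y_sub; auto. lra. }
    assert (Haa : forall i, Y (aa i) /\ nY (G (aa i)) <= C * a * (1/2)^i).
    { intros i. destruct (Inv i) as [I1 I2].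
      assert (Hpos : 0 < a * (1/2)^(S i)) by (apply Rmult_lt_0_compat; auto; apply pow_lt; lra).
      destruct (Hap' (r i) _ I1 Hpos) as [Q1 [Q2 Q3]]. split. auto.
      eapply Rle_trans. apply Q3. rewrite Rmult_assoc. apply Rmult_le_compat_l; auto. }
    set (Sp := psum aa).
    assert (HS : forall p, Sp p = fun n => sub (y n) (r p n)).
    { induction p.
      - simpl. apply functional_extensionality; intros n. symmetry. apply sub_self.
      - change (Sp (S p)) with (fun n => add (Sp p n) (aa p n)). rewrite IHp.
        apply functional_extensionality; intros n. rewrite add_sub_assoc'. reflexivity. }
    assert (YS : forall p, Y (Sp p)) by (intros p; rewrite HS; apply Y_sub; auto; apply Inv).
    destruct (Ycompl (fun p => G (Sp p)) (fun p => C * a * (1/2)^p) (fun p => 2 * C * a * (1/2)^p))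
      as [z [Hz Hzk]].
    - intros p. apply (G_spec _ (YS p)).
    - intros p. change (Sp (S p)) with (fun n => add (Sp p n) (aa p n)).
      rewrite G_add by (auto; apply Haa).
      replace (fun n => sub (add (G (Sp p) n) (G (aa p) n)) (G (Sp p) n)) with (G (aa p)).
      apply Haa. apply functional_extensionality; intros n. symmetry. apply sub_add_l.
    - intros p. simpl. lra.
    - intros p. assert (0 <= (1/2)^p) by (apply pow_le; lra). assert (0 <= C * a) by nra. nra.
    - intros eps Heps. destruct (half_small (2 * C * a) eps Heps) as [N HN]. exists N.
      specialize (HN N (le_n N)). lra.
    - assert (Gyz : G y = z).
      { apply (CG Sp); auto.
        - intros eps Heps. destruct (half_small a eps Heps) as [N HN]. exists N. intros p Hp.
          rewrite HS. replace (fun n => sub (sub (y n) (r p n)) (y n)) with (fun n => opp (r p n)).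
          rewrite (proj2 (Y_opp _ (proj1 (Inv p)))). pose proof (proj2 (Inv p)). specialize (HN p Hp). lra.
          apply functional_extensionality; intros n. symmetry. apply sub_sub_l.
        - intros eps Heps. destruct (half_small (2 * C * a) eps Heps) as [N HN]. exists N. intros p Hp.
          specialize (HN p Hp). pose proof (Hzk p). lra. }
      rewrite Gyz. pose proof (Hzk 0%nat). simpl in H.
      change (Sp 0%nat) with (fun _ : Z => @zero X) in H. replace (fun n => sub (z n) (G (fun _ => zero) n)) with z in H. lra.
      rewrite G_zero. apply functional_extensionality; intros n. symmetry. apply sub_0_r. }
  exists (Rmax (2 * C) 1). split. apply Rmax_r. intros x Dx.
  assert (Ex : G (T x) = x) by (apply G_uniq; auto; apply Dx).
  rewrite <- Ex at 1. eapply Rle_trans. apply Main. apply Dx.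
  apply Rmult_le_compat_r. apply nY_ge0, Dx. apply Rmax_l.
Qed.

End Base.

Theorem theorem3p4 (X : NormedSpace) (nrm : Z -> X -> R) (A : Z -> X -> X)
  (B : seqR -> Prop) (nB : seqR -> R) :
  complete X ->
  is_banach_seq_space B nB ->
  admissible B nB ->
  (forall m, is_norm_on X (nrm m) /\ equiv_norm X (nrm m)) ->
  (forall m, bounded_linear X (A m)) ->
  TB_bijective X A nrm B ->
  exp_dichotomy X A nrm.
Proof.
  intros HX HB Hadm Hn HA HT.
  destruct (c_ratio B nB Hadm) as [N [HN1 HN]].
  destruct (bdd_inv X nrm A B nB HX HB Hadm Hn HA HT) as [K [HK1 HK]].
  destruct (nat_gt (4 * M N K)) as [L HL].
  eapply (dich X nrm A B nB HB Hadm Hn HA HT N K HN1 HN HK1 HK L). lra.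
Qed.
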